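(* Let $(X_n)_{n\ge0}$, $(Z_n)_{n\ge0}$, $(\bar Z_n)_{n\ge0}$ be random processes on a common probability space, adapted to a filtration $(\mathcal F_n)$ and taking values in a measurable space $\Omega$, with $X_n\sim p_n$, $Z_n\sim q_n$, $\bar Z_n\sim\bar q_n$. Let $B_n\subseteq\Omega$ be measurable sets such that for every $n\in\mathbb{N}_0$: (1) if $X_k\in B_k^c$ for all $0\le k\le n-1$, then $Z_n=\bar Z_n$; (2) $\chi^2(\bar q_n\|p_n)\le D_n^2$; (3) $\mathbb{P}(X_n\in B_n)\le\delta_n$. Then for every $n$, $$\mathrm{TV}(q_n,\bar q_n)\le\sum_{k=0}^{n-1}(D_k^2+1)^{1/2}\delta_k^{1/2},\qquad \mathrm{TV}(p_n,q_n)\le D_n+\sum_{k=0}^{n-1}(D_k^2+1)^{1/2}\delta_k^{1/2}.$$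
   Context: $\chi^2(q\|p)=\int (dq/dp)^2\,dp-1$ (infinite if $q\not\ll p$); $\mathrm{TV}$ denotes total variation distance. *)

(* Defs.v *)
From HB Require Import structures.
From mathcomp Require Import all_boot all_order all_algebra.
From mathcomp Require Import all_classical all_reals all_analysis.
Set Implicit Arguments. Unset Strict Implicit. Unset Printing Implicit Defensive.
Import Order.TTheory GRing.Theory Num.Theory.
Local Open Scope classical_set_scope.
Local Open Scope ring_scope.

Section Defs.
Context {R : realType} {d : measure_display} {Om : measurableType d}.

Definition is_density (p q : probability Om R) (f : Om -> R) : Prop :=
  [/\ measurable_fun setT f, (forall x, 0 <= f x) &
      forall A, measurable A -> q A = (\int[p]_(x in A) (f x)%:E)%E].

(* chi^2(q || p) = \int (dq/dp)^2 dp - 1 ; +oo if q is not << p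
   (the infimum over the empty set of densities is +oo; all densities
   agree p-a.e. so the infimum is the common value otherwise) *)
Definition chi2 (q p : probability Om R) : \bar R :=
  ereal_inf [set (\int[p]_x ((f x) ^+ 2)%:E - 1)%E | f in is_density p q].

Definition TV (p q : probability Om R) : \bar R :=
  ereal_sup [set `|(p A - q A)%E|%E | A in measurable].
End Defs.

Definition filtration {dT : measure_display} (T : measurableType dT)
    (F : nat -> set (set T)) : Prop :=
  (forall n, @sigma_algebra T setT (F n)) /\
  (forall n, F n `<=` measurable) /\
  (forall n, F n `<=` F n.+1).

Definition adapted {dT d : measure_display} (T : measurableType dT)
    (Om : measurableType d) (F : nat -> set (set T)) (X : nat -> T -> Om) : Prop :=
  forall n B, measurable B -> F n (X n @^-1` B).

(* Main.v *)
Require Import Defs.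
From HB Require Import structures.
From mathcomp Require Import all_boot all_order all_algebra.
From mathcomp Require Import all_classical all_reals all_analysis.
From mathcomp Require Import ring lra measurable_realfun.
Import Order.TTheory GRing.Theory Num.Theory.
Local Open Scope classical_set_scope.
Local Open Scope ring_scope.

Lemma amgm (R : realFieldType) (c y : R) : 0 < c -> `|y| <= y ^+ 2 / (2 * c) + c / 2.
Proof.
move=> c0.
set z := _ + _.
have hz : z * (2 * c) = y ^+ 2 + c ^+ 2.
  rewrite /z; field; by rewrite gt_eqF.
have c2 : 0 < 2 * c by rewrite mulr_gt0.
rewrite ler_norml; apply/andP; split; rewrite -(ler_pM2r c2) ?mulNr hz; clear hz z.
- have := sqr_ge0 (y + c); rewrite sqrrD; lra.
- have := sqr_ge0 (y - c); rewrite sqrrB; lra.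
Qed.
Lemma Gle (R : realFieldType) (D eta r : R) : 0 <= D -> 0 < eta -> r < D ^+ 2 + eta ^+ 2 + 1 ->
  (2 * (D + eta))^-1 * r + ((2 * (D + eta))^-1 + (D + eta) / 2) - (D + eta)^-1 <= D + eta.
Proof.
move=> D0 e0 rl.
have c0 : 0 < D + eta by lra.
have -> : (2 * (D + eta))^-1 * r + ((2 * (D + eta))^-1 + (D + eta) / 2) - (D + eta)^-1
   = (r - 1 + (D + eta) ^+ 2) / (2 * (D + eta)).
  by field; rewrite gt_eqF.
rewrite ler_pdivrMr ?mulr_gt0 //; nra.
Qed.

Lemma chi2_tv (R : realType) d (Om : measurableType d) (p q : probability Om R) (D : R) :
  0 <= D -> (chi2 q p <= (D ^+ 2)%:E)%E ->
  forall A, measurable A -> `| fine (p A) - fine (q A) | <= D.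
Proof.
move=> D0 hchi A mA.
apply/ler_addgt0Pr => eta eta0.
set c := D + eta.
have c0 : 0 < c by rewrite /c; apply: (le_lt_trans D0); rewrite ltrDl.
have : (chi2 q p < (D ^+ 2 + eta ^+ 2)%:E)%E.
  by apply: (le_lt_trans hchi); rewrite lte_fin ltrDl exprn_gt0.
case/ereal_inf_lt => _ [f [mf f0 hf] <-] hlt.
have mfE : measurable_fun setT (EFin \o f) by apply/measurable_EFinP.
have mf2 : measurable_fun setT (fun x => f x ^+ 2) by exact: measurable_realfun.measurable_funX.
set I2 := (\int[p]_x (f x ^+ 2)%:E)%E.
have I2ge0 : (0 <= I2)%E by apply: integral_ge0 => x _; rewrite lee_fin exprn_ge0.
have I2lt : (I2 < (D ^+ 2 + eta ^+ 2 + 1)%:E)%E by rewrite EFinD -lteBlDr.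
have I2fin : I2 \is a fin_num by rewrite ge0_fin_numE // (lt_trans I2lt) ?ltry.
set r := fine I2; have I2E : I2 = r%:E by rewrite fineK.
have rlt : r < D ^+ 2 + eta ^+ 2 + 1 by rewrite -lte_fin -I2E.
pose g x := (f x - 1) ^+ 2 / (2 * c) + c / 2.
have g0 x : 0 <= g x.
  by rewrite /g; apply: addr_ge0; apply: divr_ge0; rewrite ?sqr_ge0 ?mulr_ge0 ?ltW...
have mg : measurable_fun setT g.
  change (measurable_fun setT ((fun x => ((f \- cst 1) x) ^+ 2) \* cst (2 * c)^-1 \+ cst (c / 2))).
  apply: measurable_funD; last exact: measurable_cst.
  apply: measurable_funM; last exact: measurable_cst.
  apply: measurable_funX.
  apply: measurable_funB => //; exact: measurable_cst.
have mgE : measurable_fun setT (EFin \o g) by apply/measurable_EFinP.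
have cn0 : c != 0 by rewrite gt_eqF.
have e1 : (\int[p]_x ((g x)%:E + (c^-1)%:E * (f x)%:E) =
           \int[p]_x (((2 * c)^-1)%:E * (f x ^+ 2)%:E + ((2 * c)^-1 + c / 2)%:E))%E.
  apply: eq_integral => x _; rewrite -!EFinM -!EFinD; congr EFin; rewrite /g.
  by field.
have c'0 : 0 <= c^-1 by rewrite invr_ge0 ltW.
have c''0 : 0 <= (2 * c)^-1 by rewrite invr_ge0 mulr_ge0 ?ltW.
rewrite ge0_integralD // in e1; last 3 first.
- by move=> x _; rewrite lee_fin.
- by move=> x _; rewrite -EFinM lee_fin mulr_ge0.
- exact: measurable_funeM.
rewrite ge0_integralD // in e1; last 3 first.
- by move=> x _; rewrite -EFinM lee_fin mulr_ge0 ?exprn_ge0.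
- by apply: measurable_funeM; exact/measurable_EFinP.
- by move=> x _; rewrite lee_fin; apply: addr_ge0 => //; apply: divr_ge0; rewrite ?ltW.
rewrite ge0_integralZl_EFin // in e1; last by move=> x _; rewrite lee_fin.
rewrite ge0_integralZl_EFin // in e1; last 2 first.
- by move=> x _; rewrite lee_fin exprn_ge0.
- exact/measurable_EFinP.
rewrite integral_cst // -hf // !probability_setT mule1 -/I2 I2E in e1.
have p1 : p setT = 1%E by exact: probability_setT.
rewrite -[X in (_ + _ * X)%E]/(p setT) p1 mule1 in e1.
set Gr := (2 * c)^-1 * r + ((2 * c)^-1 + c / 2) - c^-1.
have GE : (\int[p]_x (g x)%:E = Gr%:E)%E.
  have := congr1 (fun z => z - (c^-1)%:E)%E e1; rewrite /= addeK // => ->.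
have GleC : Gr <= c by exact: Gle.
have bound : forall h1 h2 : Om -> R, measurable_fun setT h1 -> measurable_fun setT h2 ->
    (forall x, 0 <= h1 x) -> (forall x, 0 <= h2 x) -> (forall x, h1 x <= h2 x + g x) ->
    (\int[p]_(x in A) (h1 x)%:E <= \int[p]_(x in A) (h2 x)%:E + Gr%:E)%E.
  move=> h1 h2 mh1 mh2 h10 h20 h12.
  have mh1A : measurable_fun A (EFin \o h1).
    by apply: (measurable_funS measurableT) => //; exact/measurable_EFinP.
  have mh2A : measurable_fun A (EFin \o h2).
    by apply: (measurable_funS measurableT) => //; exact/measurable_EFinP.
  have mgA : measurable_fun A (EFin \o g).
    by apply: (measurable_funS measurableT) => //.
  apply: (@le_trans _ _ (\int[p]_(x in A) ((h2 x)%:E + (g x)%:E))%E).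
    apply: ge0_le_integral => //.
    - by move=> x Ax; rewrite lee_fin.
    - by apply: emeasurable_funD.
    - by move=> x Ax; rewrite -EFinD lee_fin.
  rewrite ge0_integralD //; last 2 first.
  - by move=> x Ax; rewrite lee_fin.
  - by move=> x Ax; rewrite lee_fin.
  apply: leeD2l; rewrite -GE.
  apply: ge0_subset_integral => //.
  by move=> x _; rewrite lee_fin.
have h1 x : f x <= 1 + g x.
  have := @amgm _ c (f x - 1) c0; rewrite -/(g x) => h.
  have := ler_norm (f x - 1); lra.
have h2 x : 1 <= f x + g x.
  have := @amgm _ c (f x - 1) c0; rewrite -/(g x) => h.
  have := ler_norm (1 - f x); rewrite distrC; lra.
have pf := fin_num_measure p A mA.
have qf := fin_num_measure q A mA.
have hp : p A = (\int[p]_(x in A) (cst 1 x)%:E)%E 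
  by rewrite -[RHS]/(\int[p]_(x in A) (cst 1%E x))%E integral_cst // mul1e.
have hq := hf A mA.
have b1 := bound f (cst 1) mf (measurable_cst _) f0 (fun _ => ler01) h1.
have b2 := bound (cst 1) f (measurable_cst _) mf (fun _ => ler01) f0 h2.
rewrite -hp -hq -(fineK pf) -(fineK qf) -EFinD lee_fin in b1.
have b2' : fine (p A) <= fine (q A) + Gr.
  by move: b2; rewrite -hp -hq -(fineK pf) -(fineK qf) -EFinD lee_fin.
rewrite ler_norml; apply/andP; split; lra.
Qed.

Lemma term_le (R : realType) (x dl D : R) : 0 <= x -> x <= 1 -> x <= dl -> 0 <= D ->
  x <= Num.sqrt (D ^+ 2 + 1) * Num.sqrt dl.
Proof.
move=> x0 x1 xd D0.
have h1 : x <= Num.sqrt dl.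
  have hx : x ^+ 2 <= dl by rewrite expr2; nra.
  by rewrite -(ger0_norm x0) -sqrtr_sqr ler_wsqrtr // real_normK ?num_real.
have h2 : 1 <= Num.sqrt (D ^+ 2 + 1).
  rewrite -{1}sqrtr1; apply: ler_wsqrtr; have := sqr_ge0 D; lra.
apply: (le_trans h1); rewrite -[X in X <= _]mul1r; apply: ler_wpM2r => //.
Qed.

Theorem theorem5 (R : realType) (dT : measure_display) (T : measurableType dT)
  (P : probability T R) (d : measure_display) (Om : measurableType d)
  (F : nat -> set (set T)) (X Z Zbar : nat -> T -> Om)
  (p q qbar : nat -> probability Om R)
  (B : nat -> set Om) (D delta : nat -> R) :
  filtration F -> adapted F X -> adapted F Z -> adapted F Zbar ->
  (forall n A, measurable A -> p n A = P (X n @^-1` A)) ->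
  (forall n A, measurable A -> q n A = P (Z n @^-1` A)) ->
  (forall n A, measurable A -> qbar n A = P (Zbar n @^-1` A)) ->
  (forall n, measurable (B n)) ->
  (forall n, 0 <= D n) ->
  (forall n t, (forall k, (k < n)%N -> ~ B k (X k t)) -> Z n t = Zbar n t) ->
  (forall n, (chi2 (qbar n) (p n) <= ((D n) ^+ 2)%:E)%E) ->
  (forall n, (P (X n @^-1` B n) <= (delta n)%:E)%E) ->
  forall n,
    (TV (q n) (qbar n) <=
      (\sum_(0 <= k < n) Num.sqrt ((D k) ^+ 2 + 1) * Num.sqrt (delta k))%:E)%E /\
    (TV (p n) (q n) <=
      (D n + \sum_(0 <= k < n) Num.sqrt ((D k) ^+ 2 + 1) * Num.sqrt (delta k))%:E)%E.
Proof.
move=> [_ [FM _]] adX adZ adZb hp hq hqb mB D0 hZ hchi hdl n.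
set S := \sum_(0 <= k < n) _.
have mXB k : measurable (X k @^-1` B k) by apply: FM; apply: adX.
pose E m := [set t | exists k, (k < m)%N /\ B k (X k t)].
have mE m : measurable (E m).
  elim: m => [|m IH].
    by rewrite (_ : E 0 = set0) //; apply/seteqP; split => t // [k []].
  rewrite (_ : E m.+1 = E m `|` X m @^-1` B m); first exact: measurableU.
  apply/seteqP; split => t.
    move=> [k [km Bk]]; move: km; rewrite ltnS leq_eqVlt => /orP [/eqP ekm|km].
      by right; rewrite /= -ekm.
    by left; exists k.
  by move=> [[k [km Bk]]|Bm]; [exists k; split => //; exact: ltnW|exists m].
have PE m : (P (E m) <= (\sum_(0 <= k < m) fine (P (X k @^-1` B k)))%:E)%E.
  elim: m => [|m IH].
    by rewrite big_geq // (_ : E 0 = set0) ?measure0 //; apply/seteqP; split => t // [k []].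
  rewrite (_ : E m.+1 = E m `|` X m @^-1` B m).
    rewrite big_nat_recr //= EFinD; apply: (le_trans (measureU2 _ _ _)) => //.
    by apply: leeD => //; rewrite fineK // fin_num_measure.
  apply/seteqP; split => t.
    move=> [k [km Bk]]; move: km; rewrite ltnS leq_eqVlt => /orP [/eqP ekm|km].
      by right; rewrite /= -ekm.
    by left; exists k.
  by move=> [[k [km Bk]]|Bm]; [exists k; split => //; exact: ltnW|exists m].
have ES : fine (P (E n)) <= S.
  rewrite -lee_fin fineK ?fin_num_measure //; apply: (le_trans (PE n)).
  rewrite lee_fin; apply: ler_sum => k _.
  have f1 := fin_num_measure P _ (mXB k).
  apply: term_le => //.
  - by rewrite -lee_fin fineK.
  - by rewrite -lee_fin fineK // probability_le1.
  - by rewrite -lee_fin fineK // hdl.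
have coup A : measurable A -> `|fine (q n A) - fine (qbar n A)| <= S.
  move=> mA.
  have mZ : measurable (Z n @^-1` A) by apply: FM; apply: adZ.
  have mZb : measurable (Zbar n @^-1` A) by apply: FM; apply: adZb.
  have key (Y1 Y2 : T -> Om) : (forall t, ~ E n t -> Y1 t = Y2 t) ->
      measurable (Y1 @^-1` A) -> measurable (Y2 @^-1` A) ->
      fine (P (Y1 @^-1` A)) <= fine (P (Y2 @^-1` A)) + fine (P (E n)).
    move=> hY m1 m2.
    rewrite -lee_fin EFinD !fineK ?fin_num_measure //.
    apply: (le_trans _ (measureU2 _ _ _)) => //.
    apply: le_measure; rewrite ?inE //; first exact: measurableU.
    move=> t Yt; have [Et|nEt] := pselect (E n t); first by right.
    by left; rewrite /= -(hY t nEt).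
  have hZZ t : ~ E n t -> Z n t = Zbar n t.
    move=> nE; apply: hZ => k kn Bk; apply: nE; by exists k.
  have k1 := key _ _ hZZ mZ mZb.
  have k2 := key _ _ (fun t h => esym (hZZ t h)) mZb mZ.
  rewrite hq // hqb //.
  rewrite ler_norml; apply/andP; split; lra.
split.
  apply: ge_ereal_sup => _ [A mA <-].
  rewrite -(fineK (fin_num_measure (q n) A mA)) -(fineK (fin_num_measure (qbar n) A mA)).
  by rewrite -EFinB abse_EFin lee_fin coup.
apply: ge_ereal_sup => _ [A mA <-].
rewrite -(fineK (fin_num_measure (q n) A mA)) -(fineK (fin_num_measure (p n) A mA)).
rewrite -EFinB abse_EFin lee_fin.
have h1 := @chi2_tv _ _ _ (p n) (qbar n) (D n) (D0 n) (hchi n) A mA.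
have h2 := coup A mA.
have := ler_distD (fine (qbar n A)) (fine (p n A)) (fine (q n A)).
have := distrC (fine (qbar n A)) (fine (q n A)).
lra.
Qed.
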